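(* Let $F$ be a Pythagorean formally real field with finitely many orderings, let $\sigma_1,\dots,\sigma_n\in X_F$ form a basis (i.e. their characters form a basis of $\chi(\dot F/\dot F^2)$ and every element of $X_F$ is a product of an odd number of them), and let $\tau\in\mathcal G_F$ be such that $\chi_\tau\sigma_i\in X_F$ for all $i=1,\dots,n$. Then $\chi_\tau X_F=X_F$.
   Context: $F$ has characteristic $0$; Pythagorean: every sum of two squares is a square; formally real: $-1$ is not a sum of squares. $\mathcal G_F=\mathrm{Gal}(F^{(3)}/F)$ is the W-group, where $F^{(2)}=F(\sqrt a:a\in\dot F)$ and $F^{(3)}$ is the compositum of all quadratic extensions $K$ of $F^{(2)}$ with $K/F$ Galois. $X_F$ is the set of orderings of $F$, each ordering $P$ identified with its signature character $\operatorname{sgn}_P\in\chi(\dot F/\dot F^2)=\mathrm{Hom}(\dot F/\dot F^2,\{\pm1\})$ ($\operatorname{sgn}_P(a)=1$ iff $a\in P$). For $\tau\in\mathcal G_F$, $\chi_\tau\in\chi(\dot F/\dot F^2)$ is the character $a\mapsto\tau(\sqrt a)/\sqrt a$; products of characters are pointwise. *)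

(* Defs.v *)
From HB Require Import structures.
From mathcomp Require Import all_boot all_order all_algebra all_fingroup all_field.
Set Implicit Arguments. Unset Strict Implicit. Unset Printing Implicit Defensive.
Import GRing.Theory.
Local Open Scope ring_scope.

Definition pythagorean (F : fieldType) : Prop :=
  forall a b : F, exists c : F, a ^+ 2 + b ^+ 2 = c ^+ 2.

Definition formally_real (F : fieldType) : Prop :=
  forall s : seq F, \sum_(x <- s) x ^+ 2 != -1.

(* An ordering of F, given as its positive cone P (containing 0):
   P + P <= P, P P <= P, P u -P = F, P n -P = {0}. *)
Definition ordering (F : fieldType) (P : pred F) : Prop :=
  [/\ forall a b, P a -> P b -> P (a + b),
      forall a b, P a -> P b -> P (a * b),
      forall a, P a \/ P (- a)
    & forall a, P a -> P (- a) -> a = 0].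

Definition finitely_many_orderings (F : fieldType) : Prop :=
  exists m (f : 'I_m -> pred F),
    forall P, ordering P -> exists i, forall a, P a = f i a.

(* A character chi in Hom(F^*/F^*2, {+-1}) is represented by the
   proposition "chi a = 1" for a <> 0 (values at 0 are irrelevant). *)
Definition is_char (F : fieldType) (c : F -> Prop) : Prop :=
  forall a b : F, a != 0 -> b != 0 -> (c (a * b) <-> (c a <-> c b)).

Definition char_eq (F : fieldType) (c d : F -> Prop) : Prop :=
  forall a : F, a != 0 -> (c a <-> d a).

Definition char_mul (F : fieldType) (c d : F -> Prop) : F -> Prop :=
  fun a => c a <-> d a.

Definition sgn (F : fieldType) (P : pred F) : F -> Prop := fun a => P a.

(* membership of a character in X_F (orderings identified with signatures) *)
Definition in_XF (F : fieldType) (c : F -> Prop) : Prop :=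
  exists P : pred F, ordering P /\ char_eq c (sgn P).

Definition prod_sgn (F : fieldType) n (sigma : 'I_n -> pred F)
  (S : {set 'I_n}) : F -> Prop :=
  fun a => ~~ odd #|[set i in S | ~~ sigma i a]|.

Definition XF_basis (F : fieldType) n (sigma : 'I_n -> pred F) : Prop :=
  [/\ forall i, ordering (sigma i),
      forall S : {set 'I_n}, char_eq (prod_sgn sigma S) (fun _ => True) ->
        S = set0,
      forall c : F -> Prop, is_char c ->
        exists S : {set 'I_n}, char_eq c (prod_sgn sigma S)
    &
      forall P, ordering P ->
        exists S : {set 'I_n}, odd #|S| /\ char_eq (sgn P) (prod_sgn sigma S)].

(* L is a (finite, normal) extension of F; F is identified with 1%VS.
   x is a square root of an element of F. *)
Definition sqrtF (F : fieldType) (L : fieldExtType F) (x : L) : bool :=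
  x ^+ 2 \in 1%VS.

(* b in E generates a quadratic (or trivial) extension E(sqrt b) which is
   Galois over F, where E = F^(2) is Galois over F: every F-conjugate of b
   lies in b E^2. (Automorphisms of E extend to L since L/F is normal.) *)
Definition galois_rad (F : fieldType) (L : splittingFieldType F)
  (E : {vspace L}) (b : L) : Prop :=
  b \in E /\
  forall g : gal_of {:L}, exists2 c, c \in E & g b = b * c ^+ 2.

(* L is (a copy of) F^(3), with s a list of square roots such that
   F^(2) = F(s):
   - F(s) contains every square root (in L) of elements of F,
     and every element of F has a square root in L  (so F(s) = F^(2));
   - L is generated over F^(2) by square roots of elements b of F^(2)
     with F^(2)(sqrt b)/F Galois (L is the compositum of such K);
   - every such quadratic extension occurs in L (maximality). *)
Definition is_F3 (F : fieldType) (L : splittingFieldType F) (s : seq L) : Prop :=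
  let F2 := <<1%VS & s>>%VS in
  [/\ all (@sqrtF F L) s,
      forall a : F, exists x : L, x ^+ 2 = a%:A,
      forall x : L, sqrtF x -> x \in F2,
      (exists t : seq L,
          (forall y, y \in t -> galois_rad F2 (y ^+ 2)) /\
          <<F2 & t>>%VS = fullv)
    & forall b : L, galois_rad F2 b -> exists y : L, y ^+ 2 = b].

(* chi_tau(a) = tau(sqrt a)/sqrt a; "chi_tau a = 1" iff tau fixes a square
   root of a (for a <> 0, equivalently every square root). *)
Definition chi_tau (F : fieldType) (L : splittingFieldType F)
  (tau : gal_of {:L}) : F -> Prop :=
  fun a => exists x : L, x ^+ 2 = a%:A /\ tau x = x.

(* Main.v *)
Require Import Defs.
From Stdlib Require Import Classical.
From HB Require Import structures.
From mathcomp Require Import all_boot all_order all_algebra all_fingroup all_field.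
Import GRing.Theory.
Local Open Scope ring_scope.
Set Implicit Arguments. Unset Strict Implicit.

Section Ord.
Variable F : fieldType.

Lemma ord_neg (O : pred F) a : ordering O -> a != 0 -> O (- a) = ~~ O a.
Proof.
case=> _ _ h3 h4 a0; case Ha: (O a) => /=.
  by apply/negP => Hn; move/eqP: a0; apply; apply: h4.
by case: (h3 a) => //; rewrite Ha.
Qed.

Lemma ord_mul (O : pred F) a b : ordering O -> a != 0 -> b != 0 ->
  O (a * b) = (O a == O b).
Proof.
move=> hO a0 b0; have ab0 : a * b != 0 by rewrite mulf_neq0.
have [_ h2 _ _] := hO.
case Ha: (O a); case Hb: (O b) => /=.
- by apply: h2.
- have : O (a * - b) by apply: h2; rewrite ?ord_neg ?Hb.
  by rewrite mulrN ord_neg // => /negbTE.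
- have : O (- a * b) by apply: h2; rewrite ?ord_neg ?Ha.
  by rewrite mulNr ord_neg // => /negbTE.
- have : O (- a * - b) by apply: h2; rewrite ?ord_neg ?Ha ?Hb.
  by rewrite mulrNN.
Qed.

Lemma ord_add (O : pred F) a b : ordering O -> a != 0 -> b != 0 -> a + b != 0 ->
  (O a == O b) ==> (O (a + b) == O a).
Proof.
move=> hO a0 b0 c0; have [h1 _ _ _] := hO.
case Ha: (O a); case Hb: (O b) => //=.
- by rewrite (h1 _ _ Ha Hb).
- have : O (- a + - b) by apply: h1; rewrite ord_neg ?Ha ?Hb.
  by rewrite -opprD ord_neg // => /negbTE ->.
Qed.
End Ord.

Lemma iffB (x y : bool) : (x <-> y) -> x = y.
Proof. by move=> [h1 h2]; apply/idP/idP; [exact: h1 | exact: h2]. Qed.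

Lemma key (Pa Pb Pc qa qb qc sa sb sc : bool) :
  (qa == qb) ==> (qc == qa) -> (sa == sb) ==> (sc == sa) ->
  Pa == (qa == sa) -> Pb == (qb == sb) -> Pc != (qc == sc) ->
  [/\ (Pa == Pb) -> (Pa == Pc) -> sa != sb,
      (Pa != Pb) -> (Pa == Pc) -> sb == sc &
      (Pa != Pb) -> (Pa != Pc) -> sa == sc].
Proof.
by case: Pa; case: Pb; case: Pc; case: qa; case: qb; case: qc;
   case: sa; case: sb; case: sc.
Qed.

Lemma hlp1 (C : Prop) (x y : bool) : ((C <-> x) <-> y) -> (C <-> (y == x)).
Proof. case: (classic C) => hC; case: x; case: y; rewrite /= /is_true /eq_op /=; intuition (try discriminate). Qed.
Lemma hlp2 (C : Prop) (x y z : bool) : (C <-> z) -> ((C <-> x) <-> y) -> z = (y == x).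
Proof. case: (classic C) => hC; case: x; case: y; case: z;  rewrite /= /is_true /eq_op /=; intuition (try discriminate). Qed.
Lemma hlp3 (C : Prop) (p z : bool) : (C <-> z) -> ((p == z) <-> (p <-> C)).
Proof. case: (classic C) => hC; case: p; case: z;  rewrite /= /is_true /eq_op /=; intuition (try discriminate). Qed.

Lemma parity1 n (S : {set 'I_n}) (f g : 'I_n -> bool) : odd #|S| ->
  (forall i, i \in S -> f i != g i) ->
  odd #|[set i in S | ~~ f i]| != odd #|[set i in S | ~~ g i]|.
Proof.
move=> oS h.
have -> : [set i in S | ~~ g i] = S :\: [set i in S | ~~ f i].
  apply/setP => i; rewrite !inE; case iS: (i \in S) => //=.
  by have := h i iS; case: (f i); case: (g i).
have sub : [set i in S | ~~ f i] \subset S by apply/subsetP => i; rewrite inE => /andP[].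
move: oS; rewrite -(cardsID [set i in S | ~~ f i] S) (setIidPr sub) oddD.
by case: (odd _); case: (odd _).
Qed.

Lemma parity2 n (S : {set 'I_n}) (f g : 'I_n -> bool) :
  (forall i, i \in S -> f i = g i) ->
  [set i in S | ~~ f i] = [set i in S | ~~ g i].
Proof.
move=> h; apply/setP => i; rewrite !inE; case iS: (i \in S) => //=.
by rewrite h.
Qed.

Lemma construct (F : fieldType) n (sigma : 'I_n -> pred F) (chi : F -> Prop) :
  (forall i, ordering (sigma i)) ->
  (forall i, in_XF (char_mul chi (sgn (sigma i)))) ->
  forall (P : pred F) (S : {set 'I_n}), ordering P -> odd #|S| ->
  char_eq (sgn P) (prod_sgn sigma S) ->
  exists R : pred F, ordering R /\ forall a, a != 0 -> (R a <-> (P a <-> chi a)).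
Proof.
move=> hs hQ P S hP oS hPS.
have [i0 i0S] : exists i0, i0 \in S by apply/card_gt0P; apply: odd_gt0.
have [Q0 [hQ0 eQ0]] := hQ i0.
pose cb a := Q0 a == sigma i0 a.
have hchi : forall a, a != 0 -> (chi a <-> cb a).
  by move=> a a0; apply: hlp1; apply: eQ0.
have hQi : forall i, exists Q, ordering Q /\ forall a, a != 0 -> cb a = (Q a == sigma i a).
  move=> i; have [Q [hQ' eQ]] := hQ i; exists Q; split => // a a0.
  apply: (hlp2 (hchi a a0)); exact: (eQ a a0).
have hPb : forall a, a != 0 -> P a = ~~ odd #|[set i in S | ~~ sigma i a]|.
  by move=> a a0; apply: iffB; apply: hPS.
have cbN : forall a, a != 0 -> cb (- a) = cb a.
  move=> a a0; rewrite /cb (ord_neg hQ0 a0) (ord_neg (hs i0) a0).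
  by case: (Q0 a); case: (sigma i0 a).
have cbM : forall a b, a != 0 -> b != 0 -> cb (a * b) = (cb a == cb b).
  move=> a b a0 b0; rewrite /cb (ord_mul hQ0 a0 b0) (ord_mul (hs i0) a0 b0).
  by case: (Q0 a); case: (sigma i0 a); case: (Q0 b); case: (sigma i0 b).
pose R a := (a == 0) || (P a == cb a).
exists R; split; last first.
  by move=> a a0; rewrite /R (negbTE a0) /=; apply: hlp3; apply: hchi.
split.
- move=> a b; rewrite /R.
  case: (eqVneq a 0) => [->|a0] /=; first by move=> _ h; rewrite (add0r b).
  case: (eqVneq b 0) => [->|b0] /=; first by move=> h _; rewrite (addr0 a) h orbT.
  case: (eqVneq (a + b) 0) => [//|c0] /= Ra Rb.
  apply: contraT => Rc.
  have H : forall i, i \in S -> [/\ (P a == P b) -> (P a == P (a + b)) -> sigma i a != sigma i b,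
      (P a != P b) -> (P a == P (a + b)) -> sigma i b == sigma i (a + b) &
      (P a != P b) -> (P a != P (a + b)) -> sigma i a == sigma i (a + b)].
    move=> i iS; have [Q [hQ' eQ]] := hQi i.
    apply: key; first exact: ord_add hQ' a0 b0 c0.
    - exact: ord_add (hs i) a0 b0 c0.
    - by rewrite -eQ.
    - by rewrite -eQ.
    - by rewrite -eQ.
  have aP := ord_add hP a0 b0 c0.
  case: (eqVneq (P a) (P b)) => eab; case: (eqVneq (P a) (P (a + b))) => eac.
  + have h : forall i, i \in S -> sigma i a != sigma i b.
      by move=> i iS; have [h1 _ _] := H i iS; apply: h1; apply/eqP.
    move: (parity1 oS h) (hPb a a0) (hPb b b0) eab.
    by case: (odd #|[set i in S | ~~ sigma i a]|); case: (odd #|[set i in S | ~~ sigma i b]|); case: (P a); case: (P b).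
  + by move: aP eac; rewrite eab eqxx /= => /eqP ->; rewrite eqxx.
  + have h : forall i, i \in S -> sigma i b = sigma i (a + b).
      by move=> i iS; have [_ h1 _] := H i iS; apply/eqP; apply: h1 => //; apply/eqP.
    have E := parity2 h.
    have : P b = P (a + b) by rewrite hPb // hPb // E.
    by move=> ebc; move: eab; rewrite eac ebc eqxx.
  + have h : forall i, i \in S -> sigma i a = sigma i (a + b).
      by move=> i iS; have [_ _ h1] := H i iS; apply/eqP; apply: h1.
    have E := parity2 h.
    have eac' : P a = P (a + b) by rewrite hPb // hPb // E.
    by move: eac; rewrite eac' eqxx.
- move=> a b; rewrite /R.
  case: (eqVneq a 0) => [->|a0] /=; first by rewrite mul0r eqxx.
  case: (eqVneq b 0) => [->|b0] /=; first by rewrite mulr0 eqxx.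
  rewrite mulf_eq0 (negbTE a0) (negbTE b0) /= (ord_mul hP a0 b0) cbM //.
  by case: (P a); case: (P b); case: (cb a); case: (cb b).
- move=> a; rewrite /R; case: (eqVneq a 0) => [->|a0] /=; first by left.
  rewrite oppr_eq0 (negbTE a0) /= (ord_neg hP a0) cbN //.
  by case: (P a); case: (cb a); [left|right|right|left].
- move=> a; rewrite /R; case: (eqVneq a 0) => [//|a0] /=.
  rewrite oppr_eq0 (negbTE a0) /= (ord_neg hP a0) cbN //.
  by case: (P a); case: (cb a).
Qed.

Unset Implicit Arguments.

Theorem lemma3p4 (F : fieldType) (L : splittingFieldType F) (s : seq L)
  (n : nat) (sigma : 'I_n -> pred F) (tau : gal_of {:L}) :
  [pchar F] =i pred0 ->
  pythagorean F ->
  formally_real F ->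
  finitely_many_orderings F ->
  is_F3 s ->
  XF_basis sigma ->
  (tau \in 'Gal({:L} / 1%AS)%g) ->
  (forall i, in_XF (char_mul (chi_tau tau) (sgn (sigma i)))) ->
  (* chi_tau X_F = X_F *)
  (forall P, ordering P -> in_XF (char_mul (chi_tau tau) (sgn P))) /\
  (forall P, ordering P ->
     exists Q, ordering Q /\ char_eq (sgn P) (char_mul (chi_tau tau) (sgn Q))).
Proof.
move=> _ _ _ _ _ [hs _ _ hodd] _ hQ; split.
- move=> P hP; have [S [oS hPS]] := hodd P hP.
  have [R [hR eR]] := construct hs hQ hP oS hPS.
  exists R; split => // a a0; have := eR a a0; rewrite /char_mul /sgn.
  case: (classic (chi_tau tau a)); case: (P a); case: (R a); tauto.
- move=> P hP; have [S [oS hPS]] := hodd P hP.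
  have [R [hR eR]] := construct hs hQ hP oS hPS.
  exists R; split => // a a0; have := eR a a0; rewrite /char_mul /sgn.
  case: (classic (chi_tau tau a)); case: (P a); case: (R a); tauto.
Qed.
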